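(* Assume the setting in the context, with $\delta=0$ (so $y>0$ and $\theta>0$). Set $A_m=\lfloor z_0/\theta\rfloor$. Write $y_0=\overline{y_0}\,y+\widehat{y_0}$ and $h=\overline{h}\,y+\widehat{h}$ with $0\le \widehat{y_0},\widehat{h}<y$; when $w>0$ also write $x_0=\overline{x_0}\,w+\widehat{x_0}$ and $l=\overline{l}\,w+\widehat{l}$ with $0\le\widehat{x_0},\widehat{l}<w$. (i.1) If $w=0$, then $$d(m,T)=(1+A_m)(1+A_m+\overline{y_0})+(\overline{h}-2)\frac{A_m(1+A_m)}{2}+\sum_{k=0}^{A_m}\left\lfloor\frac{\widehat{y_0}+k\widehat{h}}{y}\right\rfloor. \quad ( * )$$ (i.2) If $w>0$, set $k_0=\left\lceil\frac{z_0w-x_0\theta}{b}\right\rceil$ (then $k_0\ge 0$). (i.2.1) If $k_0=0$, then $d(m,T)$ is given by $( * )$. (i.2.2) If $1\le k_0\le A_m$, then $$d(m,T)=(1+A_m)(1+A_m+\overline{y_0})+k_0(\overline{x_0}-A_m)+(\overline{h}-2)\frac{A_m(1+A_m)}2+\overline{l}\frac{(k_0-1)k_0}{2}+\sum_{k=0}^{A_m}\left\lfloor\frac{\widehat{y_0}+k\widehat{h}}{y}\right\rfloor+\sum_{k=0}^{k_0-1}\left\lfloor\frac{\widehat{x_0}+k\widehat{l}}{w}\right\rfloor.$$ (i.2.3) If $k_0>A_m$, then $$d(m,T)=(1+A_m)(1+\overline{x_0}+\overline{y_0})+(\overline{l}+\overline{h}-2)\frac{A_m(1+A_m)}2+\s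um_{k=0}^{A_m}\left\lfloor\frac{\widehat{x_0}+k\widehat{l}}{w}\right\rfloor+\sum_{k=0}^{A_m}\left\lfloor\frac{\widehat{y_0}+k\widehat{h}}{y}\right\rfloor.$$
   Context: Let $a<b<c$ be positive integers with $\gcd(a,b,c)=1$ and $T=\langle a,b,c\rangle=\{xa+yb+zc:x,y,z\in\mathbb N\}$. For $m\in T$, the denumerant $d(m,T)$ is the number of $(x,y,z)\in\mathbb N^3$ with $xa+yb+zc=m$. For $(i,j)\in\mathbb N^2$ let $[\![i,j]\!]=[i,i+1)\times[j,j+1)\subset\mathbb R^2$. For integers $0\le w<l$, $0\le y<h$, the L-shape $\mathrm L(l,h,w,y)$ is the set of unit squares $[\![i,j]\!]$ with $0\le i<l$, $0\le j<h$, excluding those with $i\ge l-w$ and $j\ge h-y$ (it has $lh-wy$ squares). An L-shape $\mathcal H$ is related to $T$ if it consists of exactly $c$ squares, every residue class modulo $c$ equals $ia+jb \bmod c$ for exactly one $[\![i,j]\!]\in\mathcal H$, and for each $[\![i,j]\!]\in\mathcal H$, $ia+jb=\min\{sa+tb:(s,t)\in\mathbb N^2,\ sa+tb\equiv ia+jb \pmod c\}$. Setting: $\mathcal H=\mathrm L(l,h,w,y)$ is an L-shape related to $T$, and $\delta=(la-yb)/c$, $\theta=(hb-wa)/c$; it is known that $\delta,\theta$ are nonnegative integers with $\delta+\theta>0$, $a=h\delta+y\theta$, $b=w\delta+l\theta$, $lh-wy=c$. For $m\in T$, the basic factorization of $m$ with respect to $\mathcal H$ is the unique $(x_0,y_0,z_0)\in\mathbb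 N^3$ with $x_0a+y_0b+z_0c=m$ and $[\![x_0,y_0]\!]\in\mathcal H$. Fix $m\in T$ with basic factorization $(x_0,y_0,z_0)$. *)

(* Defs.v *)
From HB Require Import structures.
From mathcomp Require Import all_boot all_order all_algebra.
Set Implicit Arguments. Unset Strict Implicit. Unset Printing Implicit Defensive.

(* Denumerant d(m,T) for T = <a,b,c>: number of (x,y,z) in N^3 with
   x a + y b + z c = m.  When a,b,c > 0 every solution has x,y,z <= m,
   so the count over the box [0,m]^3 is the full count. *)
Definition denumerant (a b c m : nat) : nat :=
  \sum_(x < m.+1) \sum_(y < m.+1) \sum_(z < m.+1)
     ((x * a + y * b + z * c == m) : nat).

Definition in_monoid (a b c m : nat) : Prop :=
  exists x y z : nat, x * a + y * b + z * c = m.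

Definition inL (l h w y i j : nat) : bool :=
  [&& i < l, j < h & ~~ ((l - w <= i) && (h - y <= j))].

Definition related_L (a b c l h w y : nat) : Prop :=
  [/\ l * h - w * y = c,   (* the L-shape has exactly c squares *)
      (forall r, r < c -> exists i j, [/\ inL l h w y i j, (i * a + j * b) %% c = r
         & forall i' j', inL l h w y i' j' -> (i' * a + j' * b) %% c = r -> i' = i /\ j' = j])
    & (forall i j, inL l h w y i j -> forall s t,
         s * a + t * b = i * a + j * b %[mod c] -> i * a + j * b <= s * a + t * b)].

(* Main.v *)
Require Import Defs.
From HB Require Import structures.
From mathcomp Require Import all_boot all_order all_algebra.
Import Order.TTheory GRing.Theory Num.Theory.
From mathcomp Require Import zify ring.

Lemma sum_uniq n (P : nat -> bool) i0 :
  (forall i, P i -> i = i0) -> \sum_(i < n) (P i : nat) = ((i0 < n) && P i0 : nat).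
Proof.
move=> HP; elim: n => [|n IH]; first by rewrite big_ord0.
rewrite big_ord_recr /= IH.
case: (ltngtP i0 n) => [lt|gt|->].
- rewrite ltnS ltnW //=. case Pn: (P n); last by rewrite addn0.
  by move: (HP _ Pn) => E; rewrite E ltnn in lt.
- have -> : (i0 < n.+1) = false by lia.
  rewrite /=; case Pn: (P n) => //; by move: (HP _ Pn) => E; rewrite E ltnn in gt.
- by case: (P n); rewrite /= ?ltnSn.
Qed.

Lemma sum_le n U : U < n -> \sum_(i < n) (i <= U : nat) = U.+1.
Proof.
elim: n => [//|n IH] H; rewrite big_ord_recr /=.
case: (ltnP U n) => lt.
- by rewrite IH // addn0.
- have E : U = n by lia. subst U.
  have -> : \sum_(i < n) (i <= n : nat) = n.
    rewrite (eq_bigr (fun _ => 1)); first by rewrite sum1_card card_ord.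
    by move=> i _; rewrite ltnW.
  by rewrite addn1.
Qed.

Lemma sum_gt n f : \sum_(j < n.+1) (f < j : nat) = n - f.
Proof.
elim: n => [|n IH]; first by rewrite big_ord_recr big_ord0 /=; case: f.
rewrite big_ord_recr /= IH. case: (ltnP f n.+1) => H /=; lia.
Qed.

Lemma sum_id2 n : (\sum_(i < n) i) * 2 = n.-1 * n.
Proof.
elim: n => [|n IH]; first by rewrite big_ord0.
rewrite big_ord_recr /= mulnDl IH. case: n {IH} => //= n. lia.
Qed.

Lemma sum_id n : \sum_(i < n) i = (n.-1 * n) %/ 2.
Proof. by rewrite -sum_id2 mulnK. Qed.

Lemma mod_cancel l y r x0 : coprime l y -> r < l -> x0 < l ->
  r * y = x0 * y %[mod l] -> r = x0.
Proof.
move=> cop rl xl E.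
case: (leqP r x0) => H.
- have := esym E; move/eqP; rewrite eqn_mod_dvd ?leq_mul2r ?H ?orbT // -mulnBl Gauss_dvdl //.
  move=> D. have: x0 - r = 0. 
    case: (posnP (x0 - r)) => // P. have := dvdn_leq P D. lia.
  lia.
- have := E; move/eqP; rewrite eqn_mod_dvd ?leq_mul2r ?(ltnW H) ?orbT // -mulnBl Gauss_dvdl //.
  move=> D. have: r - x0 = 0.
    case: (posnP (r - x0)) => // P. have := dvdn_leq P D. lia.
  lia.
Qed.

Section Char.
Variables (a b c l h w y x0 y0 z0 th A B : nat).
Hypotheses (ypos : 0 < y) (lpos : 0 < l) (thpos : 0 < th)
  (Ha : a = y * th) (Hb : b = l * th) (Hc : c + w * y = l * h) (cpos : 0 < c)
  (coply : coprime l y) (copth : coprime th c) (x0l : x0 < l)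
  (Hmin : forall s t, s*a+t*b = x0*a+y0*b %[mod c] -> x0*a+y0*b <= s*a+t*b)
  (HA : A = z0 %/ th) (HB : y0 + A * h < B).

Definition condj (j i : nat) : bool :=
  [&& j * th <= z0, i * y <= y0 + j * h & j * w <= x0 + i * l].

Lemma sol_back j i : condj j i ->
  (x0 + i* l - j*w) * a + (y0 + j*h - i*y) * b + (z0 - j*th) * c
   = x0*a + y0*b + z0*c.
Proof.
case/and3P=> H1 H2 H3.
have e4 : i*(l*a) = i*(y*b) by rewrite Ha Hb; ring.
have e5 : j*(h*b) = j*(w*a) + j*(th*c).
  rewrite Ha Hb -mulnDr; congr (j * _).
  transitivity ((l * h) * th); first ring. rewrite -Hc; ring.
move: (x0 + i* l - j*w) (subnK H3) => X e1.
move: (y0 + j*h - i*y) (subnK H2) => Y e2.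
move: (z0 - j*th) (subnK H1) => Z e3.
move/(congr1 (muln ^~ a)): e1 => /= f1.
move/(congr1 (muln ^~ b)): e2 => /= f2.
move/(congr1 (muln ^~ c)): e3 => /= f3.
clear -f1 f2 f3 e4 e5. lia.
Qed.

Lemma sol_char X Y Z :
  (X*a + Y*b + Z*c == x0*a + y0*b + z0*c : nat) =
  \sum_(j < A.+1) \sum_(i < B)
     (condj j i && (X == x0 + i* l - j*w) && (Y == y0 + j*h - i*y) && (Z == z0 - j*th) : nat).
Proof.
set P := fun j i => (condj j i && (X == x0 + i* l - j*w) && (Y == y0 + j*h - i*y) && (Z == z0 - j*th)).
set i0 := fun j => (y0 + j*h - Y) %/ y.
rewrite (eq_bigr (fun j : 'I_A.+1 => ((i0 j < B) && P j (i0 j) : nat))); last first.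
  move=> j _; apply: sum_uniq => i; rewrite /P /condj.
  case/andP=> /andP [/andP [/and3P [H1 H2 H3] _] /eqP EY] _.
  rewrite /i0 /=.
  have -> : y0 + j * h - Y = i * y by rewrite EY; clear -H2; lia.
  by rewrite mulnK.
rewrite (sum_uniq _ (fun j => (i0 j < B) && P j (i0 j)) ((z0 - Z) %/ th)); last first.
  move=> j; rewrite /P /condj.
  case/andP=> _ /andP [/andP [/andP [/and3P [H1 H2 H3] _] _] /eqP EZ].
  have -> : z0 - Z = j * th by rewrite EZ; clear -H1; lia.
  by rewrite mulnK.
congr nat_of_bool; apply/idP/idP.
- move/eqP=> E.
  have Hmod : X*a+Y*b = x0*a+y0*b %[mod c].
    have : (Z*c + (X*a+Y*b)) %% c = (z0*c + (x0*a+y0*b)) %% c.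
      by congr (_ %% c); clear -E; lia.
    by rewrite !modnMDl.
  have Hle := Hmin _ _ Hmod.
  have HZ : Z <= z0 by rewrite -(leq_pmul2r cpos); clear -E Hle; lia.
  rewrite Ha Hb in E Hle.
  have Hle2 : x0*y+y0* l <= X*y+Y* l.
    by rewrite -(leq_pmul2r thpos); move: Hle; clear; lia.
  have ED : th * (X*y+Y* l - (x0*y+y0* l)) = (z0 - Z) * c.
    rewrite mulnBr mulnBl; move: E; clear; lia.
  move: (X*y+Y* l - (x0*y+y0* l)) (subnK Hle2) ED => D ED1 ED.
  have Hdv : th %| z0 - Z by rewrite -(Gauss_dvdl _ copth) -ED dvdn_mulr.
  move: (divnK Hdv); move Ej0: ((z0 - Z) %/ th) => j Ej.
  have EDj : D = j * c.
    by apply/eqP; rewrite -(eqn_pmul2l thpos) ED -Ej; apply/eqP; ring.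
  have E2 : (X + j*w)*y + Y* l = x0*y + (y0+j*h)* l.
    have : j*c + j*(w*y) = j*(l*h) by rewrite -mulnDr Hc.
    rewrite EDj in ED1. clear -ED1. lia.
  have Eq := divn_eq (X + j*w) l.
  move: (ltn_pmod (X + j*w) lpos) Eq.
  move: ((X + j*w) %/ l) ((X + j*w) %% l) => i r rl Eq.
  have Er : r = x0.
    apply: (@mod_cancel l y r x0 coply rl x0l).
    have : ((i*y + Y)* l + r * y) %% l = ((y0+j*h)* l + x0*y) %% l.
      congr (_ %% l). move: E2; rewrite Eq. clear. lia.
    by rewrite !modnMDl.
  subst r.
  have EY : i*y + Y = y0 + j*h.
    apply/eqP; rewrite -(eqn_pmul2r lpos); apply/eqP. move: E2; rewrite Eq. clear. lia.
  have jA : j * th <= z0 by move: HZ Ej; clear; lia.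
  have jA' : j <= A by rewrite HA leq_divRL.
  have jh : j * h <= A * h by rewrite leq_mul2r jA' orbT.
  have Hi0 : i0 j = i.
    have -> : i0 j = (i * y) %/ y by rewrite /i0 /=; congr (_ %/ _); move: EY; clear; lia.
    by rewrite mulnK.
  rewrite ltnS jA' /= Hi0.
  have iB : i < B.
    have : i <= i * y by rewrite leq_pmulr.
    move: HB jh EY; clear; lia.
  rewrite iB /P /condj /=.
  have Ex : X + j * w = x0 + i * l by rewrite Eq addnC.
  apply/andP; split; last by apply/eqP; move: Ej HZ; clear; lia.
  apply/andP; split; last by apply/eqP; move: EY; clear; lia.
  apply/andP; split; last by apply/eqP; move: Ex; clear; lia.
  apply/and3P; split => //; [move: EY | move: Ex]; clear; lia.
- case/andP=> _ /andP [_]; rewrite /P.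
  case/andP=> /andP [/andP [Hcd /eqP EX] /eqP EY] /eqP EZ.
  by apply/eqP; rewrite -(sol_back _ _ Hcd) -EX -EY -EZ.
Qed.
End Char.

Lemma rot3 n1 n2 n3 (F : 'I_n1 -> 'I_n2 -> 'I_n3 -> nat) :
  \sum_(i1 < n1) \sum_(i2 < n2) \sum_(i3 < n3) F i1 i2 i3 =
  \sum_(i2 < n2) \sum_(i3 < n3) \sum_(i1 < n1) F i1 i2 i3.
Proof. rewrite exchange_big /=; apply: eq_bigr => i2 _; by rewrite exchange_big. Qed.

Lemma point3 M (p q r : nat) (cnd : bool) :
  \sum_(X < M) \sum_(Y < M) \sum_(Z < M)
    (cnd && (X == p :> nat) && (Y == q :> nat) && (Z == r :> nat) : nat) =
  ([&& cnd, p < M, q < M & r < M] : nat).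
Proof.
have H1 : forall X Y : nat, \sum_(Z < M) (cnd && (X == p) && (Y == q) && (Z == r :> nat) : nat)
   = ((r < M) && (cnd && (X == p) && (Y == q)) : nat).
  move=> X Y; rewrite (sum_uniq _ (fun Z => cnd && (X == p) && (Y == q) && (Z == r)) r).
    by rewrite eqxx andbT.
  by move=> Z /andP[_ /eqP].
rewrite (eq_bigr (fun X : 'I_M => \sum_(Y < M) ((r < M) && (cnd && (X == p :> nat) && (Y == q :> nat)) : nat))); last first.
  by move=> X _; apply: eq_bigr => Y _; rewrite H1.
have H2 : forall X : nat, \sum_(Y < M) ((r < M) && (cnd && (X == p) && (Y == q :> nat)) : nat)
   = ((q < M) && ((r < M) && (cnd && (X == p))) : nat).
  move=> X; rewrite (sum_uniq _ (fun Y => (r < M) && (cnd && (X == p) && (Y == q))) q).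
    by rewrite eqxx andbT.
  by move=> Y /andP[_ /andP[_ /eqP]].
rewrite (eq_bigr (fun X : 'I_M => ((q < M) && ((r < M) && (cnd && (X == p :> nat))) : nat))); last first.
  by move=> X _; rewrite H2.
rewrite (sum_uniq _ (fun X => (q < M) && ((r < M) && (cnd && (X == p)))) p).
  rewrite eqxx andbT; clear H1 H2; by case: cnd; case: (p < M); case: (q < M); case: (r < M).
by move=> X /andP[_ /andP[_ /andP[_ /eqP]]].
Qed.

Section Count.
Variables (a b c l h w y x0 y0 z0 th A B m : nat).
Hypotheses (ypos : 0 < y) (lpos : 0 < l) (thpos : 0 < th) (apos : 0 < a) (bpos : 0 < b)
  (Ha : a = y * th) (Hb : b = l * th) (Hc : c + w * y = l * h) (cpos : 0 < c)
  (coply : coprime l y) (copth : coprime th c) (x0l : x0 < l)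
  (Hmin : forall s t, s*a+t*b = x0*a+y0*b %[mod c] -> x0*a+y0*b <= s*a+t*b)
  (HA : A = z0 %/ th) (HB : y0 + A * h < B) (Hm : x0*a+y0*b+z0*c = m).

Lemma count_den :
  denumerant a b c m = \sum_(j < A.+1) \sum_(i < B) (condj l h w y x0 y0 z0 th j i : nat).
Proof.
rewrite /denumerant.
rewrite (eq_bigr (fun X : 'I_m.+1 => \sum_(Y < m.+1) \sum_(Z < m.+1) \sum_(j < A.+1) \sum_(i < B)
     (condj l h w y x0 y0 z0 th j i && (X == x0 + i * l - j*w :> nat) && (Y == y0 + j*h - i*y :> nat) && (Z == z0 - j*th :> nat) : nat))); last first.
  move=> X _; apply: eq_bigr => Y _; apply: eq_bigr => Z _.
  by rewrite -(@sol_char a b c l h w y x0 y0 z0 th A B ypos lpos thpos Ha Hb Hc cpos coply copth x0l Hmin HA HB) Hm.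
under eq_bigr => X _ do under eq_bigr => Y _ do rewrite rot3.
under eq_bigr => X _ do rewrite rot3.
rewrite rot3; apply: eq_bigr => j _; apply: eq_bigr => i _.
rewrite point3.
case Hcd: (condj l h w y x0 y0 z0 th j i) => //=.
have := @sol_back a b c l h w y x0 y0 z0 th Ha Hb Hc _ _ Hcd; rewrite Hm => E.
have Hx : (x0 + i * l - j * w) <= (x0 + i * l - j * w) * a by rewrite leq_pmulr.
have Hy : (y0 + j * h - i * y) <= (y0 + j * h - i * y) * b by rewrite leq_pmulr.
have Hz : (z0 - j * th) <= (z0 - j * th) * c by rewrite leq_pmulr.
rewrite !ltnS.
have -> : x0 + i * l - j * w <= m by move: E Hx Hy Hz; clear; lia.
have -> : y0 + j * h - i * y <= m by move: E Hx Hy Hz; clear; lia.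
have -> : z0 - j * th <= m by move: E Hx Hy Hz; clear; lia.
done.
Qed.
End Count.

Lemma sum_trunc B K (F : nat -> nat) : K <= B -> (forall i, K <= i -> F i = 0) ->
  \sum_(i < B) F i = \sum_(i < K) F i.
Proof.
move=> KB HF; rewrite -!(big_mkord xpredT) (@big_cat_nat _ _ _ K 0 B _ _ (leq0n K) KB) /=.
rewrite [X in _ + X]big_nat_cond [X in _ + X]big1 ?addn0 //.
by move=> i /andP[/andP[Ki _] _]; apply: HF.
Qed.

Lemma sum_lin n p q (f : nat -> nat) :
  \sum_(j < n) (p + j * q + f j) = n * p + q * \sum_(j < n) j + \sum_(j < n) f j.
Proof.
elim: n => [|n IH]; first by rewrite !big_ord0 muln0.
rewrite !big_ord_recr /= IH. ring.
Qed.

Section Arith.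
Variables (l h w y x0 y0 z0 th A B : nat).
Hypotheses (ypos : 0 < y) (lpos : 0 < l) (Hwy : w * y <= l * h) (HB : y0 + A * h < B)
  (HA : A * th <= z0).

Lemma per_j j : j <= A ->
  \sum_(i < B) (condj l h w y x0 y0 z0 th j i : nat) =
  ((y0 + j*h) %/ y).+1 - \sum_(i < B) (x0 + i* l < j*w : nat).
Proof.
move=> jA.
have jth : j * th <= z0 by apply: leq_trans HA; rewrite leq_mul2r jA orbT.
have impl : forall i, x0 + i * l < j * w -> i * y <= y0 + j * h.
  move=> i H.
  have H1 : i * l * y <= j * w * y.
    by rewrite leq_mul2r (_ : i * l <= j * w) ?orbT //; move: H; clear; lia.
  have H2 : j * w * y <= j * (l * h) by rewrite -mulnA leq_mul2l Hwy orbT.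
  have : (i * y) * l <= (j * h) * l.
    have -> : (i*y)* l = i* l*y by ring.
    have -> : (j*h)* l = j*(l*h) by ring.
    exact: leq_trans H1 H2.
  rewrite leq_mul2r (negbTE (lt0n_neq0 lpos)) /=. lia.
rewrite (eq_bigr (fun i : 'I_B => (i * y <= y0 + j * h : nat) - (x0 + i * l < j * w : nat))); last first.
  move=> i _; rewrite /condj jth /=.
  case H: (x0 + i * l < j * w).
    have -> : (j * w <= x0 + i * l) = false by move: H; clear; lia.
    by rewrite (impl _ H) andbF.
  have -> : (j * w <= x0 + i * l) = true by move: H; clear; lia.
  by rewrite andbT subn0.
rewrite sumnB; last first.
  move=> i _; case H: (x0 + i * l < j * w) => //=. by rewrite impl.
congr (_ - _).
rewrite (eq_bigr (fun i : 'I_B => (i <= (y0 + j * h) %/ y : nat))); last first.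
  by move=> i _; rewrite leq_divRL.
apply: sum_le.
have : (y0 + j*h) %/ y <= y0 + j * h by apply: leq_div.
have : j * h <= A * h by rewrite leq_mul2r jA orbT.
lia.
Qed.

Lemma G_le j : j <= A ->
  \sum_(i < B) (x0 + i* l < j*w : nat) <= ((y0 + j*h) %/ y).+1.
Proof.
move=> jA.
have impl : forall i, x0 + i * l < j * w -> i * y <= y0 + j * h.
  move=> i H.
  have H1 : i * l * y <= j * w * y.
    by rewrite leq_mul2r (_ : i * l <= j * w) ?orbT //; move: H; clear; lia.
  have H2 : j * w * y <= j * (l * h) by rewrite -mulnA leq_mul2l Hwy orbT.
  have : (i * y) * l <= (j * h) * l.
    have -> : (i*y)* l = i* l*y by ring.
    have -> : (j*h)* l = j*(l*h) by ring.
    exact: leq_trans H1 H2.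
  rewrite leq_mul2r (negbTE (lt0n_neq0 lpos)) /=. lia.
have jh : j * h <= A * h by rewrite leq_mul2r jA orbT.
have dv : (y0 + j*h) %/ y <= y0 + j * h by apply: leq_div.
rewrite -(@sum_le B ((y0 + j * h) %/ y)); last by move: dv jh HB; clear; lia.
apply: leq_sum => i _; case H: (x0 + i * l < j * w) => //=.
by rewrite leq_divRL // impl.
Qed.

End Arith.

Lemma G_eval (A B K x0 l w : nat) : 0 < w -> K <= B ->
  (forall i, K <= i -> A * w <= x0 + i * l) ->
  \sum_(j < A.+1) \sum_(i < B) (x0 + i * l < j * w : nat) =
  \sum_(i < K) (A - (x0 + i * l) %/ w).
Proof.
move=> wpos KB H2.
rewrite exchange_big /=.
rewrite (@sum_trunc B K (fun i => \sum_(j < A.+1) (x0 + i * l < j * w : nat))) //.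
  apply: eq_bigr => i _; rewrite -sum_gt; apply: eq_bigr => j _.
  by rewrite ltn_divLR.
move=> i Ki; apply: big1 => j _.
have := H2 _ Ki; have : j * w <= A * w by rewrite leq_mul2r -ltnS ltn_ord orbT.
by move=> H3 H4; rewrite ltnNge (leq_trans H3 H4).
Qed.

Lemma G_zero (A B x0 l : nat) :
  \sum_(j < A.+1) \sum_(i < B) (x0 + i * l < j * 0 : nat) = 0.
Proof. by apply: big1 => j _; apply: big1 => i _; rewrite muln0. Qed.

Lemma sum_sub_add K A (f : nat -> nat) : (forall i, i < K -> f i <= A) ->
  \sum_(i < K) (A - f i) + \sum_(i < K) f i = K * A.
Proof.
move=> H; rewrite -big_split /=.
rewrite (eq_bigr (fun _ => A)); first by rewrite sum_nat_const card_ord.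
by move=> i _; rewrite subnK // H.
Qed.

Lemma coprime_ly a b c l h w y : 0 < c -> 0 < l -> 0 < y -> y < h -> w < l ->
  related_L a b c l h w y -> l * a = y * b -> coprime l y.
Proof.
move=> cpos lpos ypos yh wl [Hc Huniq Hmin] Hla.
set g := gcdn l y.
have gpos : 0 < g by rewrite gcdn_gt0 lpos.
case: (ltngtP g 1) => [g0|g1|g1]; first (by move: gpos g0; clear; lia); last first.
  by rewrite /coprime -/g g1.
have gl : g %| l by apply: dvdn_gcdl.
have gy : g %| y by apply: dvdn_gcdr.
set l' := l %/ g; set y' := y %/ g.
have El : l = l' * g by rewrite /l' divnK.
have Ey : y = y' * g by rewrite /y' divnK.
have l'pos : 0 < l' by move: lpos; rewrite El muln_gt0 => /andP[].
have l'l : l' < l by rewrite [X in _ < X]El -{1}(muln1 l') ltn_pmul2l.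
have y'y : y' <= y by rewrite [X in _ <= X]Ey leq_pmulr.
have Hla' : l' * a = y' * b.
  apply/eqP; rewrite -(eqn_pmul2r gpos); apply/eqP.
  by rewrite mulnAC -El mulnAC -Ey.
have [i [j [_ _ U]]] := Huniq _ (ltn_pmod (l' * a) cpos).
have I1 : inL l h w y l' 0.
  rewrite /inL l'l /= (leq_trans _ yh) //=; apply/negP => /andP[_].
  by move: yh; clear; lia.
have I2 : inL l h w y 0 y'.
  rewrite /inL lpos (leq_ltn_trans y'y yh) /=; apply/negP => /andP[].
  by move: wl; clear; lia.
have := U _ _ I1; rewrite mul0n addn0 => /(_ erefl) [E1 _].
have := U _ _ I2; rewrite mul0n add0n -Hla' => /(_ erefl) [E2 _].
by move: l'pos; rewrite E1 -E2.
Qed.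

Local Open Scope ring_scope.

Theorem theorem5 (a b c l h w y m x0 y0 z0 : nat) :
  (0 < a)%N -> (a < b)%N -> (b < c)%N -> gcdn (gcdn a b) c = 1%N ->
  (w < l)%N -> (y < h)%N ->
  related_L a b c l h w y ->
  (* delta = (l a - y b)/c = 0 *)
  (l * a = y * b)%N ->
  in_monoid a b c m ->
  (* basic factorization of m w.r.t. L(l,h,w,y) *)
  (x0 * a + y0 * b + z0 * c = m)%N -> inL l h w y x0 y0 ->
  let theta := ((h * b - w * a) %/ c)%N in
  let Am := (z0 %/ theta)%N in
  let y0b := (y0 %/ y)%N in let y0h := (y0 %% y)%N in
  let hb := (h %/ y)%N in let hh := (h %% y)%N in
  let x0b := (x0 %/ w)%N in let x0h := (x0 %% w)%N in
  let lb := (l %/ w)%N in let lh := (l %% w)%N in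
  let d : int := (denumerant a b c m)%:Z in
  let tri : int := ((Am * Am.+1) %/ 2)%N%:Z in
  let SY : int := (\sum_(0 <= k < Am.+1) ((y0h + k * hh) %/ y))%N%:Z in
  let F1 : int := (Am.+1)%N%:Z * ((Am.+1 + y0b)%N)%:Z + (hb%:Z - 2) * tri + SY in
  let k0 : int := - ((- ((z0 * w)%N%:Z - (x0 * theta)%N%:Z)) %/ b%:Z)%Z in
  ((w = 0)%N -> d = F1) /\
  ((0 < w)%N ->
     [/\ 0 <= k0,
         k0 = 0 -> d = F1,
         1 <= k0 <= Am%:Z ->
           d = (Am.+1)%N%:Z * ((Am.+1 + y0b)%N)%:Z + k0 * (x0b%:Z - Am%:Z)
               + (hb%:Z - 2) * tri
               + lb%:Z * (((`|k0|%N.-1 * `|k0|%N) %/ 2)%N)%:Z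
               + SY
               + (\sum_(0 <= k < `|k0|%N) ((x0h + k * lh) %/ w))%N%:Z
       & Am%:Z < k0 ->
           d = (Am.+1)%N%:Z * ((1 + x0b + y0b)%N)%:Z
               + ((lb + hb)%N%:Z - 2) * tri
               + (\sum_(0 <= k < Am.+1) ((x0h + k * lh) %/ w))%N%:Z
               + SY]).
Proof.
move=> apos ab bc gcd1 wl yh Hrel Hla _ Hm HinL.
have Hrel' := Hrel; case: Hrel' => Hc Huniq Hmin.
have cpos : (0 < c)%N by move: apos ab bc; clear; lia.
have bpos : (0 < b)%N by move: apos ab; clear; lia.
have lpos : (0 < l)%N by move: wl; clear; lia.
have ypos : (0 < y)%N.
  have : (0 < l * a)%N by rewrite muln_gt0 lpos apos.
  by rewrite Hla muln_gt0 => /andP[].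
have coply := @coprime_ly a b c l h w y cpos lpos ypos yh wl Hrel Hla.
have Hc' : (c + w * y = l * h)%N by move: Hc cpos; clear; lia.
have Hwy : (w * y <= l * h)%N by rewrite -Hc' leq_addl.
have ya : (y %| a)%N.
  have cyl : coprime y l by rewrite coprime_sym.
  by rewrite -(Gauss_dvdr a cyl) Hla dvdn_mulr.
move: (divnK ya); move Eth0: (a %/ y)%N => th Ea.
have Ha : a = (y * th)%N by rewrite mulnC Ea.
have Hb : b = (l * th)%N.
  apply/eqP; rewrite -(eqn_pmul2l ypos) -Hla Ha; apply/eqP; ring.
have thpos : (0 < th)%N by move: apos; rewrite Ha muln_gt0 => /andP[].
have Eth : ((h * b - w * a) %/ c)%N = th.
  have E : (h * b = w * a + th * c)%N.
    rewrite Ha Hb. transitivity (th * (l * h))%N; first ring. rewrite -Hc'; ring.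
  by rewrite E addKn mulnK.
have copth : coprime th c.
  apply: (@coprime_dvdl _ (gcdn a b)); last by rewrite /coprime gcd1.
  by rewrite dvdn_gcd Ha Hb !dvdn_mull.
have x0l : (x0 < l)%N by move: HinL; rewrite /inL => /and3P[].
have Hmin' := Hmin _ _ HinL.
cbv zeta; rewrite Eth.
set A := (z0 %/ th)%N.
have HA : (A * th <= z0)%N := leq_trunc_div z0 th.
have HA2 : (z0 < A.+1 * th)%N := ltn_ceil z0 thpos.
set q := ((- ((z0 * w)%N%:Z - (x0 * th)%N%:Z)) %/ b%:Z)%Z.
have bnz : b%:Z != 0 by move: bpos; clear; lia.
have bposZ : 0 < b%:Z by move: bpos; clear; lia.
have Hq := divz_eq (- ((z0 * w)%N%:Z - (x0 * th)%N%:Z)) b%:Z.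
have r0 := modz_ge0 (- ((z0 * w)%N%:Z - (x0 * th)%N%:Z)) bnz.
have rb := ltz_pmod (- ((z0 * w)%N%:Z - (x0 * th)%N%:Z)) bposZ.
rewrite -/q in Hq.
move: Hq r0 rb; move: ((- ((z0 * w)%N%:Z - (x0 * th)%N%:Z)) %% b%:Z)%Z => r Hq r0 rb.
have q0 : q <= 0.
  have xb : (x0 * th < b)%N by rewrite Hb ltn_pmul2r.
  move: Hq r0 rb xb bpos; clearbody q; clear; nia.
case EK: (- q) => [K|K]; last by move: EK q0; clearbody q; clear; lia.
have Eq' : q = - (K%:Z) by rewrite -EK opprK.
rewrite Eq' in Hq.
have F2 : (z0 * w <= x0 * th + K * b)%N by move: Hq r0; clear; lia.
have F1 : (x0 * th + K * b < z0 * w + b)%N by move: Hq rb; clear; lia.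
have P2 : forall i, (K <= i)%N -> (A * w <= x0 + i * l)%N.
  move=> i Ki. rewrite -(leq_pmul2r thpos).
  have e1 : (K * b <= i * b)%N by rewrite leq_mul2r Ki orbT.
  have e2 : (A * th * w <= z0 * w)%N by rewrite leq_mul2r HA orbT.
  have e3 : (i * b = i * l * th)%N by rewrite Hb mulnA.
  move: F2 e1 e2 e3; clear; lia.
have P1 : forall i, (i < K)%N -> (x0 + i * l < A.+1 * w)%N.
  move=> i iK. rewrite -(ltn_pmul2r thpos).
  have e1 : (i.+1 * b <= K * b)%N by rewrite leq_mul2r iK orbT.
  have e2 : (z0 * w <= A.+1 * th * w)%N by rewrite leq_mul2r ltnW ?orbT.
  have e3 : (i * b = i * l * th)%N by rewrite Hb mulnA.
  move: F1 e1 e2 e3; clear; lia.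
have P3 : (K <= A.+1)%N.
  have e1 : (z0 * w <= z0 * l)%N by rewrite leq_mul2l ltnW ?orbT.
  have e2 : (z0 * l < A.+1 * th * l)%N by rewrite ltn_pmul2r.
  have e3 : (A.+1 * th * l = A.+1 * b)%N by rewrite Hb; ring.
  have : (K * b < A.+2 * b)%N by move: F1 e1 e2 e3; clear; lia.
  by rewrite ltn_pmul2r.
set B := (y0 + A * h + K).+1.
have HB : (y0 + A * h < B)%N by rewrite ltnS leq_addr.
have KB : (K <= B)%N by rewrite ltnW // ltnS leq_addl.
have Dc := @count_den a b c l h w y x0 y0 z0 th A B m ypos lpos thpos apos bpos Ha Hb Hc' cpos coply copth x0l Hmin' erefl HB Hm.
have Dc2 : denumerant a b c m = (\sum_(j < A.+1) ((y0 + j * h) %/ y).+1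
     - \sum_(j < A.+1) \sum_(i < B) (x0 + i * l < j * w : nat))%N.
  rewrite Dc -sumnB; last first.
    move=> j _; apply: (@G_le l h w y x0 y0 z0 th A B ypos lpos Hwy HB HA j).
    by rewrite -ltnS ltn_ord.
  apply: eq_bigr => j _; apply: (@per_j l h w y x0 y0 z0 th A B ypos lpos Hwy HB HA j).
  by rewrite -ltnS ltn_ord.
have Gle : (\sum_(j < A.+1) \sum_(i < B) (x0 + i * l < j * w : nat) <= \sum_(j < A.+1) ((y0 + j * h) %/ y).+1)%N.
  apply: leq_sum => j _; apply: (@G_le l h w y x0 y0 z0 th A B ypos lpos Hwy HB HA j).
  by rewrite -ltnS ltn_ord.
have S1 : (\sum_(j < A.+1) ((y0 + j * h) %/ y).+1 = A.+1 * (y0 %/ y).+1 + (h %/ y) * \sum_(j < A.+1) j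
            + \sum_(j < A.+1) ((y0 %% y + j * (h %% y)) %/ y))%N.
  rewrite -(sum_lin (A.+1) (y0 %/ y)%N.+1 (h %/ y)%N (fun j => ((y0 %% y + j * (h %% y)) %/ y)%N)).
  apply: eq_bigr => j _.
  have -> : (y0 + j * h = (y0 %/ y + j * (h %/ y)) * y + (y0 %% y + j * (h %% y)))%N.
    rewrite {1}(divn_eq y0 y) {1}(divn_eq h y); ring.
  by rewrite divnMDl // addSn.
have TA2 := sum_id2 A.+1.
rewrite -(sum_id A.+1) big_mkord.
move: TA2 => /= TA2.
split.
  move=> w0.
  have G0 : (\sum_(j < A.+1) \sum_(i < B) (x0 + i * l < j * w : nat) = 0)%N by rewrite w0 G_zero.
  move: Dc2 S1 TA2 G0 Gle.
  move: (\sum_(j < A.+1) \sum_(i < B) (x0 + i * l < j * w : nat))%N => G.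
  move: (\sum_(j < A.+1) ((y0 + j * h) %/ y).+1)%N => SU.
  move: (\sum_(j < A.+1) ((y0 %% y + j * (h %% y)) %/ y))%N => SYo.
  move: (\sum_(j < A.+1) j)%N => TA.
  move: (y0 %/ y)%N (h %/ y)%N (denumerant a b c m) => y0b hb D.
  clear; lia.
move=> wpos.
have GE := @G_eval A B K x0 l w wpos KB P2.
have Sf : (\sum_(i < K) ((x0 + i * l) %/ w) = K * (x0 %/ w) + (l %/ w) * \sum_(i < K) i
            + \sum_(i < K) ((x0 %% w + i * (l %% w)) %/ w))%N.
  rewrite -(sum_lin K (x0 %/ w)%N (l %/ w)%N (fun i => ((x0 %% w + i * (l %% w)) %/ w)%N)).
  apply: eq_bigr => i _.
  have -> : (x0 + i * l = (x0 %/ w + i * (l %/ w)) * w + (x0 %% w + i * (l %% w)))%N.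
    rewrite {1}(divn_eq x0 w) {1}(divn_eq l w); ring.
  by rewrite divnMDl.
have SSA : (\sum_(i < K) (A - (x0 + i * l) %/ w) + \sum_(i < K) ((x0 + i * l) %/ w) = K * A)%N.
  apply: (@sum_sub_add K A (fun i => ((x0 + i * l) %/ w)%N)) => i iK.
  by rewrite -ltnS ltn_divLR // P1.
rewrite GE in Dc2 Gle.
have TK2 := sum_id2 K.
rewrite /= -(sum_id K) big_mkord.
move: Dc2 S1 TA2 Gle Sf SSA TK2 P3.
move: (\sum_(i < K) (A - (x0 + i * l) %/ w))%N => G.
move: (\sum_(j < A.+1) ((y0 + j * h) %/ y).+1)%N => SU.
move: (\sum_(j < A.+1) ((y0 %% y + j * (h %% y)) %/ y))%N => SYo.
move: (\sum_(i < K) ((x0 + i * l) %/ w))%N => Sf.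
move=> HD HS1 HTA HGle HSf HSSA HTK HP3.
split.
- by clear; lia.
- move=> K0. have K0' : K = 0%N by move: K0; clear; lia.
  move: K0' HD HS1 HTA HGle HSf HSSA HTK.
  move: (\sum_(i < A.+1) i)%N (\sum_(i < K) i)%N (\sum_(i < K) (x0 %% w + i * (l %% w)) %/ w)%N => TA TK SX.
  move: (y0 %/ y)%N (h %/ y)%N (x0 %/ w)%N (l %/ w)%N (denumerant a b c m) => y0b hb x0b lb D.
  clearbody A; clear; lia.
- move=> /andP[K1 KA]. move: K1 KA HD HS1 HTA HGle HSf HSSA HTK.
  move: (\sum_(i < A.+1) i)%N (\sum_(i < K) i)%N (\sum_(i < K) (x0 %% w + i * (l %% w)) %/ w)%N => TA TK SX.
  move: (y0 %/ y)%N (h %/ y)%N (x0 %/ w)%N (l %/ w)%N (denumerant a b c m) => y0b hb x0b lb D.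
  clearbody A; clear; lia.
- move=> AK. have EK1 : K = A.+1 by move: AK HP3; clear; lia.
  rewrite EK1 in HSf HSSA HTK. rewrite big_mkord. move: HD HS1 HTA HGle HSf HSSA HTK.
  move: (\sum_(i < A.+1) i)%N (\sum_(i < K) i)%N (\sum_(i < K) (x0 %% w + i * (l %% w)) %/ w)%N => TA TK SX.
  move: (y0 %/ y)%N (h %/ y)%N (x0 %/ w)%N (l %/ w)%N (denumerant a b c m) => y0b hb x0b lb D.
  clearbody A; clear; lia.
Qed.
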